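(* Let $\Gamma$ be a simple graph on $m$ vertices labeled $1,\dots,m$ and with $n$ edges, and give the edges the NBC labeling. Then every increasing $\Gamma$-forest contains no broken cycle (i.e. is an NBC forest).
   Context: NBC labeling: write each edge as $(i,j)$ with $i<j$; the edges are labeled $1,\dots,n$ so that edges with smaller vertex sum $i+j$ receive larger labels (the edge of smallest sum gets label $n$), and if two edges $(i_1,j_1),(i_2,j_2)$ have the same sum, the one with larger second vertex ($j_1>j_2$) receives the smaller label. A broken cycle is the edge set of a cycle of $\Gamma$ minus its edge of largest label. A tree in $\Gamma$ is increasing if it is rooted at its smallest-labeled vertex and every path from the root to a leaf passes through vertices with increasing labels; a $\Gamma$-forest (a forest subgraph of $\Gamma$) is increasing if each of its trees is increasing. *)

(* Defs.v *)
From mathcomp Require Import all_boot.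
Set Implicit Arguments. Unset Strict Implicit. Unset Printing Implicit Defensive.

(* Vertices 1..m are represented by 'I_m (vertex k+1 <-> ordinal k).
   An edge (i,j) with i<j is the pair (i,j) : 'I_m * 'I_m. *)
Section NBC.
Variable m : nat.
Notation V := 'I_m.
Notation edge := (V * V)%type.

Definition simple_edges (E : {set edge}) : Prop :=
  forall e, e \in E -> (e.1 < e.2)%N.

Definition esum (e : edge) : nat := (e.1 + e.2)%N.

Definition smaller_label (f e : edge) : bool :=
  (esum e < esum f)%N || ((esum f == esum e) && (e.2 < f.2)%N).

Definition nbc_label (E : {set edge}) (e : edge) : nat :=
  #|[set f in E | smaller_label f e]|.+1.

Definition adj (S : {set edge}) : rel V :=
  fun u v => ((u, v) \in S) || ((v, u) \in S).

Definition norm_edge (u v : V) : edge := if (u < v)%N then (u, v) else (v, u).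

Definition is_cycle (S : {set edge}) (c : seq V) : Prop :=
  (3 <= size c)%N /\ uniq c /\ cycle (adj S) c.

Definition cycle_edges (c : seq V) : {set edge} :=
  [set e | e \in [seq norm_edge p.1 p.2 | p <- zip c (rot 1 c)]].

Definition broken_cycle (E : {set edge}) (B : {set edge}) : Prop :=
  exists c, is_cycle E c /\
    exists2 e, e \in cycle_edges c &
      (forall f, f \in cycle_edges c -> (nbc_label E f <= nbc_label E e)%N) /\
      B = cycle_edges c :\ e.

Definition acyclic (F : {set edge}) : Prop := forall c, ~ is_cycle F c.

(* r is the root of its tree: the smallest vertex of its component *)
Definition is_root (F : {set edge}) (r : V) : Prop :=
  forall u, connect (adj F) r u -> (r <= u)%N.

(* a leaf of the rooted tree (non-root vertex without children, i.e. of degree 1) *)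
Definition is_leaf (F : {set edge}) (v : V) : Prop :=
  #|[set w | adj F v w]| = 1%N.

Definition increasing_forest (E F : {set edge}) : Prop :=
  [/\ F \subset E, acyclic F &
      forall (r : V) (p : seq V), is_root F r ->
        uniq (r :: p) -> path (adj F) r p -> p <> [::] -> is_leaf F (last r p) ->
        sorted (fun u v : V => (u < v)%N) (r :: p)].

End NBC.

(* Main.v *)
Require Import Defs.
From mathcomp Require Import all_boot zify.
Set Implicit Arguments. Unset Strict Implicit. Unset Printing Implicit Defensive.

Lemma prev_neq_next (T : eqType) (c : seq T) x :
  uniq c -> 3 <= size c -> x \in c -> prev c x != next c x.
Proof.
move=> uc sc xc.
case: (rot_to xc) => i s Hr.
have us : uniq (x :: s) by rewrite -Hr rot_uniq.
have ss : 2 <= size s by rewrite -ltnS -[(size s).+1]/(size (x :: s)) -Hr size_rot.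
apply/eqP => E.
have := next_prev uc x; rewrite E.
rewrite -(next_rot i uc) -(next_rot i uc x) Hr.
case: s us ss {Hr E} => [|y [|w s]] // us _.
move: us; rewrite /= !inE !negb_or => /and4P[/andP[xy xw] _ _ _].
case/andP: xw => xw _. rewrite !eqxx.
have yx : (y == x) = false by rewrite eq_sym (negbTE xy).
rewrite yx => wx. by rewrite wx eqxx in xw.
Qed.
Lemma zip_path (T : eqType) (x y : T) s :
  path (fun u v => (u, v) \in zip (x :: s) (rcons s y)) x (rcons s y).
Proof.
elim: s x => [|z s IH] x /=; first by rewrite inE eqxx.
rewrite inE eqxx /=.
apply: sub_path (IH z) => u v /= H; by rewrite inE H orbT.
Qed.

Lemma zip_cycle (T : eqType) (c : seq T) :
  cycle (fun u v => (u, v) \in zip c (rot 1 c)) c.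
Proof.
case: c => [|x s] //=. rewrite rot1_cons. exact: zip_path.
Qed.

Lemma norm_edgeC m (u v : 'I_m) : norm_edge u v = norm_edge v u.
Proof.
rewrite /norm_edge; case: ltngtP => // H.
by have -> : u = v by apply: val_inj.
Qed.


Lemma smaller_trans m (g e f : 'I_m * 'I_m) :
  smaller_label g e -> smaller_label e f -> smaller_label g f.
Proof.
rewrite /smaller_label /esum => /orP[H1|/andP[/eqP H1 H2]] /orP[H3|/andP[/eqP H3 H4]]; apply/orP; lia.
Qed.

Lemma label_lt m (E : {set 'I_m * 'I_m}) e f :
  e \in E -> smaller_label e f -> nbc_label E e < nbc_label E f.
Proof.
move=> eE ef; rewrite /nbc_label ltnS; apply: proper_card; apply/properP; split.
  apply/subsetP => g; rewrite !inE => /andP[-> ge] /=; exact: smaller_trans ge ef.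
exists e; first by rewrite inE eE ef.
by rewrite inE eE /smaller_label ltnn eqxx ltnn.
Qed.
Lemma adj_sym m (S : {set 'I_m * 'I_m}) : symmetric (adj S).
Proof. by move=> u v; rewrite /adj orbC. Qed.

Section Tree.
Variables (m : nat) (F : {set 'I_m * 'I_m}).
Hypothesis simF : simple_edges F.
Hypothesis acF : acyclic F.

Lemma adj_irr u : ~~ adj F u u.
Proof. by rewrite /adj orbb; apply/negP => /simF /=; rewrite ltnn. Qed.

Lemma mk_cycle y q v :
  uniq (y :: rcons q v) -> path (adj F) y (rcons q v) -> adj F v y -> q != [::] ->
  is_cycle F (y :: rcons q v).
Proof.
move=> u p a q0; split; last split => //.
  by rewrite /= size_rcons; case: q q0 {u p}.
by rewrite /= rcons_path p /= last_rcons a.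
Qed.

Lemma back_edge r q v y :
  uniq (r :: rcons q v) -> path (adj F) r (rcons q v) -> y \in r :: q ->
  y != last r q -> adj F v y -> False.
Proof.
move=> u p yin ylast a.
move: yin; rewrite inE => /orP[/eqP yr|yq].
  subst y; apply: (acF (c := r :: rcons q v)); apply: mk_cycle => //.
  by case: q ylast {u p}=> //=; rewrite eqxx.
case/splitPr: yq u p ylast => q1 q2.
rewrite rcons_cat -cat_cons cat_uniq cat_path last_cat /= => /and3P[_ _ u] /andP[_ /andP[_ p]] yl.
apply: (acF (c := y :: rcons q2 v)); apply: mk_cycle => //.
by case: q2 yl {u p} => //=; rewrite eqxx.
Qed.

Lemma uniq_size_le (s : seq 'I_m) : uniq s -> size s <= m.
Proof. by move/card_uniqP <-; rewrite -[m in _ <= m]card_ord max_card. Qed.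

Lemma leaf_ext k r s :
  m - size s <= k -> uniq (r :: s) -> path (adj F) r s -> s != [::] ->
  exists t, [/\ uniq (r :: s ++ t), path (adj F) r (s ++ t) & is_leaf F (last r (s ++ t))].
Proof.
elim: k s => [|k IH] s hk u p s0.
  by have := uniq_size_le u => /= H; move: hk; rewrite leqn0 subn_eq0 leqNgt H.
case: (#|[set w | adj F (last r s) w]| =P 1) => Hl.
  by exists [::]; rewrite cats0.
case/lastP: s hk u p s0 Hl => [|q l] // hk u p _ Hl.
rewrite last_rcons in Hl.
have xN : last r q \in [set w | adj F l w].
  by move: p; rewrite rcons_path inE adj_sym => /andP[_ ->].
have [y yN yx] : exists2 y, y \in [set w | adj F l w] & y != last r q.
  apply/exists_inP; apply: contraT; rewrite negb_exists_in => /forall_inP H.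
  exfalso; apply: Hl; apply/eqP; rewrite eqn_leq card_gt0; apply/andP; split; last by apply/set0Pn; exists (last r q).
  rewrite -(cards1 (last r q)); apply/subset_leq_card/subsetP => z zN.
  by rewrite inE; have := H z zN; rewrite negbK.
move: yN; rewrite inE => ly.
case yin: (y \in r :: rcons q l).
  move: yin; rewrite -rcons_cons mem_rcons inE => /orP[/eqP yl|yin].
    by subst y; move: ly; rewrite (negbTE (adj_irr l)).
  by case: (back_edge u p yin yx ly).
have [t [u' p' lf]] := IH (rcons (rcons q l) y) ltac:(move: hk; rewrite !size_rcons; lia)
  ltac:(by rewrite -rcons_cons rcons_uniq yin u)
  ltac:(by rewrite rcons_path p last_rcons ly)
  ltac:(by case: q {hk u p Hl xN yx yin}).
exists (y :: t); by rewrite -cat_rcons.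
Qed.


Hypothesis incr : forall (r : 'I_m) (p : seq 'I_m), is_root F r ->
  uniq (r :: p) -> path (adj F) r p -> p <> [::] -> is_leaf F (last r p) ->
  sorted (fun u v : 'I_m => (u < v)%N) (r :: p).

Lemma no_peak v u w : adj F v u -> adj F v w -> u != w -> u < v -> w < v -> False.
Proof.
move=> vu vw uw uv wv.
have csym := sym_connect_sym (adj_sym F).
case: (@arg_minnP _ v (connect (adj F) v) val (connect0 _ v)) => r vr rmin.
have root : is_root F r.
  by move=> z rz; apply: rmin; apply: connect_trans vr rz.
have rv : connect (adj F) r v by rewrite csym.
case/connectP: rv => p0 p0p lastp0.
case: (shortenP p0p) lastp0 => p pp pu _ {p0p} lastp.
have rneq : r != v.
  by apply/eqP => rv'; have := rmin u (connect1 vu); rewrite rv' /= leqNgt uv.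
case/lastP: p pp pu lastp => [|q v'] pp pu lastp.
  by rewrite /= in lastp; rewrite lastp eqxx in rneq.
rewrite last_rcons in lastp; subst v'.
have side : forall z, adj F v z -> z < v -> z != last r q -> False.
  move=> z vz zv zx.
  case zin: (z \in r :: rcons q v).
    move: zin; rewrite -rcons_cons mem_rcons inE => /orP[/eqP zv'|zin].
      by rewrite zv' ltnn in zv.
    exact: (back_edge pu pp zin zx vz).
  have u2 : uniq (r :: rcons (rcons q v) z) by rewrite -rcons_cons rcons_uniq zin pu.
  have p2 : path (adj F) r (rcons (rcons q v) z) by rewrite rcons_path pp last_rcons vz.
  have [t [u3 p3 l3]] := leaf_ext (k := m) (r := r) (s := rcons (rcons q v) z)
     ltac:(lia) u2 p2 ltac:(by case: q {pp pu rneq zx zin u2 p2}).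
  have := incr root u3 p3 ltac:(by case: q {pp pu rneq zx zin u2 p2 u3 p3 l3}) l3.
  rewrite /sorted -!cats1 -catA /= -catA /= cat_path /= => /and3P[_ _ /andP[vz' _]].
  by move: vz'; rewrite ltnNge ltnW.
case: (eqVneq u (last r q)) => [ux|ux]; last exact: (side u vu uv ux).
apply: (side w vw wv); rewrite -ux eq_sym; exact: uw.
Qed.

End Tree.

Lemma esum_norm m (u v : 'I_m) : esum (norm_edge u v) = u + v.
Proof. by rewrite /norm_edge /esum; case: ifP => //= _; rewrite addnC. Qed.

Lemma norm_in m (S : {set 'I_m * 'I_m}) u v : norm_edge u v \in S -> adj S u v.
Proof. by rewrite /norm_edge /adj; case: ifP => _ ->; rewrite ?orbT. Qed.

Lemma in_norm m (S : {set 'I_m * 'I_m}) u v :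
  simple_edges S -> adj S u v -> (norm_edge u v \in S) /\ (u != v).
Proof.
move=> sS; rewrite /norm_edge /adj => /orP[H|H]; have := sS _ H => /= lt.
  by rewrite lt H; split => //; apply/eqP => E; rewrite E ltnn in lt.
rewrite ltnNge ltnW //=; split => //; apply/eqP => E; by rewrite E ltnn in lt.
Qed.

Theorem lemma8p3 (m : nat) (E F : {set 'I_m * 'I_m}) :
  simple_edges E -> increasing_forest E F ->
  forall B : {set 'I_m * 'I_m}, broken_cycle E B -> ~~ (B \subset F).
Proof.
move=> simE [FE acF incrF] B [c [[c3 [cu ccyc]] [e ein [emax ->]]]].
apply/negP => BF.
have simF : simple_edges F by move=> f fF; apply: simE; apply: (subsetP FE).
have zc := zip_cycle c.
have edge_in : forall u v, (u, v) \in zip c (rot 1 c) -> norm_edge u v \in cycle_edges c.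
  by move=> u v H; rewrite inE; apply: (map_f (fun p => norm_edge p.1 p.2) H).
have inF : forall u v, norm_edge u v \in cycle_edges c -> norm_edge u v != e -> adj F u v.
  move=> u v H1 H2; apply: norm_in; apply: (subsetP BF); by rewrite in_setD1 H2 H1.
have nbrs : forall x, x \in c -> [/\ prev c x \in c, next c x \in c, prev c x != next c x,
   adj E (prev c x) x /\ adj E x (next c x) &
   norm_edge x (prev c x) \in cycle_edges c /\ norm_edge x (next c x) \in cycle_edges c].
  move=> x xc; split; rewrite ?mem_prev ?mem_next //.
  - exact: prev_neq_next.
  - by split; [apply: (prev_cycle ccyc) | apply: (next_cycle ccyc)].
  by split; [rewrite norm_edgeC|]; apply: edge_in; [apply: (prev_cycle zc) | apply: (next_cycle zc)].
have [x0 x0c] : exists x0, x0 \in c.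
  by case: c c3 {cu ccyc zc edge_in inF nbrs emax ein BF} => [|x s] //; exists x; rewrite inE eqxx.
case: (@arg_maxnP _ x0 (fun i => i \in c) val x0c) => M Mc Mmax.
have ltM : forall y, y \in c -> y != M -> y < M.
  move=> y yc yM; have H0 := Mmax y yc; rewrite /= in H0; rewrite ltn_neqAle H0 andbT; apply: contra yM => /eqP H.
  by apply/eqP; apply: val_inj.
have final : forall z, z \in c -> z < M -> e = (z, M) -> e \in E -> False.
  move=> z zin zM ez eE.
  have [Pc Sc PS [aP aS] [eP eS]] := nbrs z zin.
  have [y [yc yM yz yin]] : exists y, [/\ y \in c, y != M, y != z & norm_edge z y \in cycle_edges c].
    case: (eqVneq (prev c z) M) => PM.
      exists (next c z); split => //; first by rewrite -PM eq_sym.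
      by have [_ H] := in_norm simE aS; rewrite eq_sym.
    exists (prev c z); split => //.
    by have [_ ->] := in_norm simE aP.
  have := emax _ yin.
  suff : nbc_label E e < nbc_label E (norm_edge z y) by rewrite ltnNge => /negbTE ->.
  apply: label_lt eE _; rewrite /smaller_label ez esum_norm /esum /=.
  by rewrite ltn_add2l ltM.
have [Pc Sc PS [aP aS] [eP eS]] := nbrs M Mc.
have [nP PM] := in_norm simE aP.
have [nS SM] := in_norm simE (aS : adj E M (next c M)).
have PlM : prev c M < M by apply: ltM.
have SlM : next c M < M by apply: ltM => //; rewrite eq_sym.
case: (eqVneq (norm_edge M (prev c M)) e) => E1.
  apply: (final (prev c M)) => //; first by rewrite -E1 /norm_edge ltnNge ltnW.
  by rewrite -E1 norm_edgeC.
case: (eqVneq (norm_edge M (next c M)) e) => E2.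
  apply: (final (next c M)) => //; first by rewrite -E2 /norm_edge ltnNge ltnW.
  by rewrite -E2; have [] := in_norm simE aS.
apply: (no_peak simF acF incrF (inF _ _ eP E1) (inF _ _ eS E2) PS PlM SlM).
Qed.
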